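(* Let $\mathcal P\subset\mathbb R^n$ be an $n$-dimensional convex polytope and consider $\dot x=Ax+a+Bu$, $x\in\mathcal P$, with $\operatorname{rank}(B)=n-1$, $(A,B)$ controllable and $\operatorname{int}\mathcal P\cap\mathcal O=\emptyset$. Let $z\in\mathcal P$. Then the sets $\{x\in\mathcal P:\beta^Tx\le\beta^Tz\}$ and $\{x\in\mathcal P:\beta^Tx<\beta^Tz\}$ are $\mathcal P$-invariant.
   Context: $\mathcal B=\operatorname{Im}(B)$, $\mathcal O=\{x:Ax+a\in\mathcal B\}$; $\beta$ is the unit normal to $\mathcal B$ with $\beta^T(Ax+a)\le0$ for all $x\in\mathcal P$. Controls are piecewise continuous; $\phi^u_t(x_0)$ is the solution from $x_0$. A set $\mathcal A\subseteq\mathcal P$ is $\mathcal P$-invariant if for every $x_0\in\mathcal A$ and every piecewise continuous $u$, every trajectory $\phi^u_t(x_0)$ that lies in $\mathcal P$ on an interval $[0,T]$ ($T<\infty$) or $[0,\infty)$ lies in $\mathcal A$ on the same interval. *)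

(* Defs.v *)
From HB Require Import structures.
From mathcomp Require Import all_boot all_order all_algebra.
From mathcomp Require Import all_classical all_reals topology normedtype derive.
Set Implicit Arguments. Unset Strict Implicit. Unset Printing Implicit Defensive.
Import Order.TTheory GRing.Theory Num.Theory.
Import numFieldNormedType.Exports.
Local Open Scope classical_set_scope.
Local Open Scope ring_scope.

Section Defs.
Variable R : realType.

Definition dotv n (u v : 'cV[R]_n) : R := (u^T *m v) 0 0.

Definition halfspaces n k (H : 'M[R]_(k, n)) (h : 'cV[R]_k) : set 'cV[R]_n :=
  [set x | forall i, (H *m x) i 0 <= h i 0].

(* interior point (box neighbourhoods; equivalent to Euclidean balls) *)
Definition int_pt n (S : set 'cV[R]_n) (x : 'cV[R]_n) : Prop :=
  exists2 e : R, 0 < e &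
    forall y : 'cV[R]_n, (forall i, `|y i 0 - x i 0| < e) -> S y.

Definition full_dim_polytope n (P : set 'cV[R]_n) : Prop :=
  [/\ exists k (H : 'M[R]_(k, n)) (h : 'cV[R]_k), P = halfspaces H h,
      exists M : R, forall x, P x -> forall i, `|x i 0| <= M
    & exists x, int_pt P x].

Definition in_Im n m (B : 'M[R]_(n, m)) (y : 'cV[R]_n) : Prop :=
  exists v : 'cV[R]_m, y = B *m v.

Definition controllable n m (A : 'M[R]_n) (B : 'M[R]_(n, m)) : Prop :=
  \rank (\mxrow_(i < n) (A ^+ i *m B)) = n.

Definition pw_continuous m (u : R -> 'cV[R]_m) : Prop :=
  forall T : R, exists D : seq R,
    (forall t, 0 <= t <= T -> t \notin D ->
       forall j, {for t, continuous (fun s => u s j 0)}) /\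
    (forall t, t \in D -> forall j,
       (0 < t -> cvg ((fun s => u s j 0) @ t^'-)) /\
       cvg ((fun s => u s j 0) @ t^'+)).

(* x is the solution of  x' = A x + a + B u,  x(0) = x0, on [0, +oo):
   x is continuous on [0,+oo) and satisfies the ODE at every t > 0 at which
   u is continuous (Caratheodory solution for piecewise continuous u). *)
Definition is_traj n m (A : 'M[R]_n) (a : 'cV[R]_n) (B : 'M[R]_(n, m))
    (u : R -> 'cV[R]_m) (x0 : 'cV[R]_n) (x : R -> 'cV[R]_n) : Prop :=
  [/\ x 0 = x0,
      forall i, {within [set t : R | 0 <= t], continuous (fun s => x s i 0)}
    & forall t, 0 < t -> (forall j, {for t, continuous (fun s => u s j 0)}) ->
        forall i, is_derive t 1 (fun s => x s i 0) ((A *m x t + a + B *m u t) i 0)].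

Definition P_invariant n m (A : 'M[R]_n) (a : 'cV[R]_n) (B : 'M[R]_(n, m))
    (P S : set 'cV[R]_n) : Prop :=
  S `<=` P /\
  forall (x0 : 'cV[R]_n) (u : R -> 'cV[R]_m) (x : R -> 'cV[R]_n),
    S x0 -> pw_continuous u -> is_traj A a B u x0 x ->
    (forall T : R, 0 <= T -> (forall t, 0 <= t <= T -> P (x t)) ->
       forall t, 0 <= t <= T -> S (x t)) /\
    ((forall t, 0 <= t -> P (x t)) -> forall t, 0 <= t -> S (x t)).

End Defs.

(* Main.v *)
Require Import Defs.
From HB Require Import structures.
From mathcomp Require Import all_boot all_order all_algebra.
From mathcomp Require Import all_classical all_reals topology normedtype derive.
Import Order.TTheory GRing.Theory Num.Theory.
Import numFieldNormedType.Exports.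
Local Open Scope classical_set_scope.
Local Open Scope ring_scope.

Lemma mono_fin (R : realType) (g dg : R -> R) (D : seq R) :
  forall a b, a <= b -> {within (`[a, b])%classic, continuous g} ->
  (forall s, s \in `]a, b[%R -> s \notin D -> is_derive s 1 g (dg s) /\ dg s <= 0) ->
  g b <= g a.
Proof.
elim: D => [|d D IH] a b ab cg hd.
  case: (ltgtP a b) ab => // [altb|<-] _; last by [].
  have [c cab E] := MVT altb (fun s hs => (hd s hs isT).1) cg.
  rewrite -subr_le0 E; apply: mulr_le0_ge0; first exact: (hd c cab isT).2.
  by rewrite subr_ge0 ltW.
case: (boolP (d \in `]a, b[%R)) => hdab.
  have ad : a <= d by rewrite ltW // (itvP hdab).
  have db : d <= b by rewrite ltW // (itvP hdab).
  apply: (@le_trans _ _ (g d)).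
    apply: (IH d b db).
      by apply: continuous_subspaceW cg; apply: subset_itv; rewrite bnd_simp.
    move=> s hs hsD; apply: hd.
      move: hs; rewrite !in_itv /= => /andP[ds ->]; rewrite andbT.
      exact: le_lt_trans ad ds.
    rewrite in_cons negb_or hsD andbT; apply/eqP => sd.
    by move: hs; rewrite sd in_itv /= ltxx.
  apply: (IH a d ad).
    by apply: continuous_subspaceW cg; apply: subset_itv; rewrite bnd_simp.
  move=> s hs hsD; apply: hd.
    move: hs; rewrite !in_itv /= => /andP[-> sd] /=.
    exact: lt_le_trans sd db.
  rewrite in_cons negb_or hsD andbT; apply/eqP => sd.
  by move: hs; rewrite sd in_itv /= ltxx andbF.
apply: (IH a b ab cg) => s hs hsD; apply: hd => //.
rewrite in_cons negb_or hsD andbT; apply/eqP => sd.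
by move: hdab; rewrite -sd hs.
Qed.

Lemma dotv_sum (R : realType) n (beta v : 'cV[R]_n) :
  dotv beta v = \sum_(j < n) beta j 0 * v j 0.
Proof. by rewrite /dotv mxE; apply: eq_bigr => j _; rewrite mxE. Qed.

Lemma key (R : realType) (n m : nat) (P : set 'cV[R]_n)
    (A : 'M[R]_n) (a : 'cV[R]_n) (B : 'M[R]_(n, m)) (beta : 'cV[R]_n) :
  beta^T *m B = 0 ->
  (forall x, P x -> dotv beta (A *m x + a) <= 0) ->
  forall x0 u x, pw_continuous u -> is_traj A a B u x0 x ->
  forall T, 0 <= T -> (forall t, 0 <= t <= T -> P (x t)) ->
  forall t, 0 <= t <= T -> dotv beta (x t) <= dotv beta x0.
Proof.
move=> hB hP x0 u x pu [x00 cx dx] T T0 hin t /andP[t0 tT].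
have gE : (fun s => dotv beta (x s)) =
    \sum_(j < n) (fun s => beta j 0 * x s j 0).
  by rewrite fct_sumE; apply: funext => s; rewrite dotv_sum.
have [D [hD _]] := pu T.
rewrite -x00.
apply: (@mono_fin R (fun s => dotv beta (x s))
   (fun s => dotv beta (A *m x s + a)) D 0 t t0).
  apply: (continuous_subspaceW (B:=[set s : R | 0 <= s])).
    by move=> s /=; rewrite in_itv /= => /andP[].
  rewrite gE; elim/big_ind: _.
  - by move=> s; apply: cvg_cst.
  - by move=> f1 f2 c1 c2 s; apply: continuousD; [exact: c1|exact: c2].
  - move=> j _ s; apply: continuousM; last exact: cx.
    exact: cvg_cst.
move=> s hs hsD.
have s0 : 0 < s by rewrite (itvP hs).
have sT : s <= T by rewrite (le_trans _ tT) // ltW // (itvP hs).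
have Ps : P (x s) by apply: hin; rewrite ltW // sT.
split; last exact: hP.
have uc : forall j, {for s, continuous (fun s => u s j 0)}.
  by apply: hD => //; rewrite ltW // sT.
have -> : dotv beta (A *m x s + a) =
   \sum_(j < n) (beta j 0 * (A *m x s + a + B *m u s) j 0).
  rewrite -dotv_sum /dotv [in RHS]mulmxDr mulmxA hB mul0mx addr0.
  by [].
rewrite gE; apply: is_derive_sum => j.
have := dx s s0 uc j.
move=> h; exact: (is_deriveZ (beta j 0) h).
Qed.

Theorem lemma2 (R : realType) (n m : nat) (P : set 'cV[R]_n)
    (A : 'M[R]_n) (a : 'cV[R]_n) (B : 'M[R]_(n, m)) (beta z : 'cV[R]_n) :
  full_dim_polytope P ->
  \rank B = n.-1 ->
  controllable A B ->
  (forall x, int_pt P x -> ~ in_Im B (A *m x + a)) ->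
  beta^T *m B = 0 ->
  dotv beta beta = 1 ->
  (forall x, P x -> dotv beta (A *m x + a) <= 0) ->
  P z ->
  P_invariant A a B P [set x | P x /\ dotv beta x <= dotv beta z] /\
  P_invariant A a B P [set x | P x /\ dotv beta x < dotv beta z].
Proof.
move=> _ _ _ _ hB _ hP _.
have K := @key R n m P A a B beta hB hP.
split; split.
- by move=> x [].
- move=> x0 u x [Px0 h0] pu tr; split.
  + move=> T T0 hin t ht; split; first exact: hin.
    exact: le_trans (K x0 u x pu tr T T0 hin t ht) h0.
  + move=> hin t t0; split; first exact: hin.
    have ht : 0 <= t <= t by rewrite t0 lexx.
    have hin' : forall s, 0 <= s <= t -> P (x s).
      by move=> s /andP[s0 _]; apply: hin.
    exact: le_trans (K x0 u x pu tr t t0 hin' t ht) h0.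
- by move=> x [].
- move=> x0 u x [Px0 h0] pu tr; split.
  + move=> T T0 hin t ht; split; first exact: hin.
    exact: le_lt_trans (K x0 u x pu tr T T0 hin t ht) h0.
  + move=> hin t t0; split; first exact: hin.
    have ht : 0 <= t <= t by rewrite t0 lexx.
    have hin' : forall s, 0 <= s <= t -> P (x s).
      by move=> s /andP[s0 _]; apply: hin.
    exact: le_lt_trans (K x0 u x pu tr t t0 hin' t ht) h0.
Qed.
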